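(* In the static load balancing game described in the context, let $a$ be a pure Nash equilibrium and let $S(a)=\{j\in[m]: a_{ij}>0\text{ for some } i\in[n]\}$. Then the normalized loads on all servers in $S(a)$ are equal: $$L_j(a)=L:=\frac{\sum_{\ell\in S(a)}s_\ell^0+\sum_{i=1}^n\lambda_i}{\sum_{\ell\in S(a)}\mu_\ell}\qquad\text{for all } j\in S(a).$$
   Context: Static load balancing game: there are $m$ servers $[m]$ with service rates $\mu_j>0$ and initial loads $s_j^0\ge0$, and $n$ players $[n]$; player $i$ holds a job of length $\lambda_i>0$. Player $i$'s action set is $A_i=\{a_i=(a_{i1},\dots,a_{im}):\sum_j a_{ij}=1,\ a_{ij}\ge0\}$. The cost of player $i$ is $$D_i(a)=\sum_{j=1}^m \lambda_i a_{ij}\left(\frac{\lambda_i a_{ij}}{2\mu_j}+\frac{s_j^0+\sum_{k\neq i}\lambda_k a_{kj}}{\mu_j}\right).$$ A pure Nash equilibrium is a profile $a$ with $D_i(a_i,a_{-i})\le D_i(a_i',a_{-i})$ for all $i$, $a_i'\in A_i$. The normalized load on server $j$ under profile $a$ is $L_j(a)=\dfrac{s_j^0+\sum_{i=1}^n\lambda_ia_{ij}}{\mu_j}$. *)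

(* Defs.v *)
From HB Require Import structures.
From mathcomp Require Import all_boot all_order all_algebra.
Set Implicit Arguments. Unset Strict Implicit. Unset Printing Implicit Defensive.
Import Order.TTheory GRing.Theory Num.Theory.
Local Open Scope ring_scope.

Definition is_action (R : realFieldType) (m : nat) (x : 'I_m -> R) : Prop :=
  (forall j, 0 <= x j) /\ \sum_(j < m) x j = 1.

Definition cost (R : realFieldType) (m n : nat) (mu s0 : 'I_m -> R)
    (lam : 'I_n -> R) (a : 'I_n -> 'I_m -> R) (i : 'I_n) (x : 'I_m -> R) : R :=
  \sum_(j < m) lam i * x j *
     (lam i * x j / (2 * mu j) + (s0 j + \sum_(k < n | k != i) lam k * a k j) / mu j).

Definition is_NE (R : realFieldType) (m n : nat) (mu s0 : 'I_m -> R)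
    (lam : 'I_n -> R) (a : 'I_n -> 'I_m -> R) : Prop :=
  (forall i, is_action (a i)) /\
  (forall i (x : 'I_m -> R), is_action x -> cost mu s0 lam a i (a i) <= cost mu s0 lam a i x).

Definition load (R : realFieldType) (m n : nat) (mu s0 : 'I_m -> R)
    (lam : 'I_n -> R) (a : 'I_n -> 'I_m -> R) (j : 'I_m) : R :=
  (s0 j + \sum_(i < n) lam i * a i j) / mu j.

Definition used (R : realFieldType) (m n : nat) (a : 'I_n -> 'I_m -> R) : {set 'I_m} :=
  [set j | [exists i, 0 < a i j]].

(* Main.v *)
Require Import Defs.
From HB Require Import structures.
From mathcomp Require Import all_boot all_order all_algebra.
From mathcomp Require Import ring lra.
Import Order.TTheory GRing.Theory Num.Theory.
Local Open Scope ring_scope.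

Lemma small_t (R : realFieldType) (p c d : R) : 0 < p -> 0 <= c ->
  (forall t, 0 < t <= p -> 0 <= t * d + t ^+ 2 * c) -> 0 <= d.
Proof.
move=> p0 c0 H; rewrite leNgt; apply/negP => d0.
pose e := - d / (c + 1).
have e0 : 0 < e by rewrite /e divr_gt0 //; lra.
have ec : e * (c + 1) = - d by rewrite /e mulfVK //; apply/lt0r_neq0; lra.
pose t := Order.min p e.
have t0 : 0 < t by rewrite /t lt_min p0 e0.
have tp : t <= p by rewrite /t ge_min lexx.
have te : t <= e by rewrite /t ge_min lexx orbT.
have := H t; rewrite t0 tp /= => /(_ isT).
have h1 : t * c <= e * c by rewrite ler_wpM2r.
nra.
Qed.

Lemma kkt (R : realFieldType) (m n : nat) (mu s0 : 'I_m -> R) (lam : 'I_n -> R)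
    (a : 'I_n -> 'I_m -> R)
    (hmu : forall j, 0 < mu j) (hlam : forall i, 0 < lam i)
    (hNE : is_NE mu s0 lam a) i j k :
  0 < a i j -> load mu s0 lam a j <= load mu s0 lam a k.
Proof.
move=> aij.
case: (eqVneq j k) => [->|njk]; first done.
have nkj : k != j by rewrite eq_sym.
have [hact hbest] := hNE.
pose B := fun l => s0 l + \sum_(k0 < n | k0 != i) lam k0 * a k0 l.
have hL : forall l, load mu s0 lam a l = (lam i * a i l + B l) / mu l.
  by move=> l; rewrite /load /B (bigD1 i) //=; congr (_ / _); ring.
have mj : mu j != 0 by apply/lt0r_neq0.
have mk : mu k != 0 by apply/lt0r_neq0.
pose c := (lam i)^+2 * (1/(2*mu j) + 1/(2*mu k)).
have c0 : 0 <= c.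
  by rewrite /c mulr_ge0 ?sqr_ge0 // addr_ge0 // divr_ge0 // mulr_ge0 // ltW.
suff : 0 <= lam i * (load mu s0 lam a k - load mu s0 lam a j).
  by rewrite pmulr_rge0 // subr_ge0.
apply: (@small_t R (a i j) c) => // t /andP[t0 tle].
pose x := fun l => a i l + (if l == k then t else 0) - (if l == j then t else 0).
have xa : is_action x.
  split.
    move=> l; rewrite /x; case: (eqVneq l j) => [->|nlj].
      rewrite (negbTE njk) /=; lra.
    by case: ifP => _; have := (hact i).1 l; lra.
  rewrite /x sumrB big_split /= -!big_mkcond /= !big_pred1_eq (hact i).2; lra.
have := hbest i x xa; rewrite /cost -subr_ge0 -sumrB.
rewrite (bigD1 j) //= (bigD1 k) //=.
rewrite [\sum_(i0 < m | _ && _) _]big1 ?addr0; last first.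
  by move=> l /andP[lj lk]; rewrite /x (negbTE lj) (negbTE lk) addr0 subr0 subrr.
rewrite /x !eqxx (negbTE njk) (negbTE nkj) !hL /B.
move=> H; apply: (le_trans H); rewrite le_eqVlt; apply/orP; left; apply/eqP.
rewrite /c; field.
by rewrite mk mj.
Qed.

Theorem lemma3 (R : realFieldType) (m n : nat) (mu s0 : 'I_m -> R) (lam : 'I_n -> R)
    (a : 'I_n -> 'I_m -> R)
    (hmu : forall j, 0 < mu j) (hs0 : forall j, 0 <= s0 j) (hlam : forall i, 0 < lam i)
    (hNE : is_NE mu s0 lam a) :
  forall j, j \in used a ->
    load mu s0 lam a j =
    (\sum_(l in used a) s0 l + \sum_(i < n) lam i) / (\sum_(l in used a) mu l).
Proof.
move=> j ju.
have K := @kkt R m n mu s0 lam a hmu hlam hNE.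
have [hact _] := hNE.
have eqL : forall l, l \in used a -> load mu s0 lam a l = load mu s0 lam a j.
  move=> l; rewrite !inE in ju * => /existsP[i il]; move/existsP: ju => [i' ij].
  by apply/le_anti; rewrite (K _ _ _ il) (K _ _ _ ij).
have den : 0 < \sum_(l in used a) mu l.
  by rewrite (bigD1 j) //= ltr_pwDl // sumr_ge0 // => l _; apply/ltW.
apply: (mulIf (lt0r_neq0 den)); rewrite divfK ?lt0r_neq0 //.
rewrite mulr_sumr.
rewrite (eq_bigr (fun l => s0 l + \sum_(i < n) lam i * a i l)); last first.
  move=> l lu; rewrite -(eqL l lu) /load divfK //; exact/lt0r_neq0.
rewrite big_split /=; congr (_ + _).
rewrite exchange_big /=; apply: eq_bigr => i _.
rewrite -mulr_sumr -[RHS]mulr1 -(hact i).2; congr (_ * _).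
rewrite [RHS](bigID (fun l => l \in used a)) /= [X in _ = _ + X]big1 ?addr0 // => l lu.
have := (hact i).1 l; rewrite le_eqVlt => /orP[/eqP <- //|al].
by move: lu; rewrite inE; move/negP; case; apply/existsP; exists i.
Qed.
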